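(* Let $n\ge1$ and $A=(a_{i,j})\in\Theta_\vartriangle(n)$. Then $$\|A\|=\sum_{1\le i\le n,\ i<j}\sigma_{i,j}(A)+\sum_{1\le i\le n,\ i>j}\sigma_{i,j}(A),$$ where $j$ ranges over $\mathbb Z$. In particular, if $A,B\in\Theta_\vartriangle(n)$ satisfy $A\prec B$, then $\|A\|<\|B\|$.
   Context: $\Theta_\vartriangle(n)$ is the set of matrices $A=(a_{i,j})_{i,j\in\mathbb Z}$ with $a_{i,j}\in\mathbb N$, $a_{i+n,j+n}=a_{i,j}$, and for each $i$ only finitely many nonzero $a_{i,j}$. Define $\|A\|=\sum_{1\le i\le n,\,i<j}\frac{(j-i)(j-i+1)}{2}a_{i,j}+\sum_{1\le i\le n,\,i>j}\frac{(i-j)(i-j+1)}{2}a_{i,j}$. For $i\ne j$ put $\sigma_{i,j}(A)=\sum_{s\le i,\ t\ge j}a_{s,t}$ if $i<j$ and $\sigma_{i,j}(A)=\sum_{s\ge i,\ t\le j}a_{s,t}$ if $i>j$. Write $B\preceq A$ if $\sigma_{i,j}(B)\le\sigma_{i,j}(A)$ for all $i\ne j$, and $B\prec A$ if $B\preceq A$ and $\sigma_{i,j}(B)<\sigma_{i,j}(A)$ for some $i\ne j$. *)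

(* Defs.v *)
From mathcomp Require Import all_boot all_order all_algebra.
From mathcomp Require Import boolp classical_sets cardinality fsbigop.
Set Implicit Arguments. Unset Strict Implicit. Unset Printing Implicit Defensive.
Import Order.TTheory GRing.Theory Num.Theory.
Local Open Scope classical_set_scope.
Local Open Scope ring_scope.

Definition zmat := int -> int -> nat.

Definition Theta (n : nat) (A : zmat) : Prop :=
  (forall i j : int, A (i + n%:Z) (j + n%:Z) = A i j) /\
  (forall i : int, finite_set [set j : int | A i j != 0%N]).

Definition tri (i j : int) : nat := ((`|j - i|%N * (`|j - i|%N).+1) %/ 2)%N.

Definition mnorm (n : nat) (A : zmat) : nat :=
  (\sum_(p \in [set p : int * int | (1 <= p.1 <= n%:Z) && (p.1 < p.2)])
      (tri p.1 p.2 * A p.1 p.2)%N)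
  + (\sum_(p \in [set p : int * int | (1 <= p.1 <= n%:Z) && (p.2 < p.1)])
      (tri p.1 p.2 * A p.1 p.2)%N).

(* sigma_{i,j}(A); only meaningful for i != j. *)
Definition sigma (A : zmat) (i j : int) : nat :=
  if i < j then \sum_(p \in [set p : int * int | (p.1 <= i) && (j <= p.2)]) A p.1 p.2
  else \sum_(p \in [set p : int * int | (i <= p.1) && (p.2 <= j)]) A p.1 p.2.

Definition mpreceq (B A : zmat) : Prop :=
  forall i j : int, i != j -> (sigma B i j <= sigma A i j)%N.

Definition mprec (B A : zmat) : Prop :=
  mpreceq B A /\ exists i j : int, i != j /\ (sigma B i j < sigma A i j)%N.

(* Main.v *)
Require Import Defs.
From mathcomp Require Import all_boot all_order all_algebra.
From mathcomp Require Import boolp classical_sets cardinality fsbigop.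
From mathcomp Require Import zify.
From mathcomp Require finmap.
Import Order.TTheory GRing.Theory Num.Theory.
Local Open Scope classical_set_scope.
Local Open Scope ring_scope.

Lemma fs_conv (P : pred (int*int)) (F : int*int -> nat) (s t : seq nat)
  (g : nat -> nat -> int*int) :
  uniq s -> uniq t ->
  (forall x y x' y', g x y = g x' y' -> x = x' /\ y = y') ->
  (forall p, P p -> F p != 0%N -> exists2 x, x \in s & exists2 y, y \in t & p = g x y) ->
  \sum_(p \in [set p | P p]) F p =
  \sum_(x <- s) \sum_(y <- t) (if P (g x y) then F (g x y) else 0%N).
Proof.
move=> us ut ginj Hsupp.
have -> : [set p | P p] = [set` P] by [].
rewrite -(bigfs _ (r := [seq g x y | x <- s, y <- t])); last first.
- move=> p Pp; apply: contraNeq => Fp; have [x xs [y yt ->]] := Hsupp p Pp Fp.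
  exact: allpairs_f.
- apply: allpairs_uniq => // [[x y]] [x' y'] _ _ /= /ginj [-> ->] //.
rewrite big_mkcond big_allpairs_dep; apply: eq_bigr => x _; apply: eq_bigr => y _ //.
Qed.
Lemma fs_nz (T : choiceType) (S : set T) (F : T -> nat) :
  \sum_(p \in S) F p != 0%N -> exists p, S p /\ F p != 0%N.
Proof.
move=> H; case: (pselect (exists p, S p /\ F p != 0%N)) => // N.
move: H; rewrite fsbig1 // => p Sp; apply/eqP/negPn/negP => Fp; apply: N; by exists p.
Qed.

Lemma per_nat {n A} : Theta n A -> forall (m : nat) s t,
  A (s + (m * n)%:Z) (t + (m * n)%:Z) = A s t.
Proof.
case=> Hp _; elim=> [|m IH] s t; first by rewrite mul0n !addr0.
have -> : ((m.+1 * n)%:Z) = (m * n)%:Z + n%:Z by rewrite mulSn PoszD addrC.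
by rewrite !addrA Hp IH.
Qed.

Lemma per_int {n A} : Theta n A -> forall (k : int) s t,
  A (s + k * n%:Z) (t + k * n%:Z) = A s t.
Proof.
move=> HA [m|m] s t.
  by rewrite -PoszM per_nat.
have := per_nat HA m.+1 (s + Negz m * n%:Z) (t + Negz m * n%:Z).
have E : forall x, x + Negz m * n%:Z + (m.+1 * n)%:Z = x by move=> x; rewrite NegzE; lia.
by rewrite !E => <-.
Qed.

Lemma row_bound {n A} : Theta n A -> forall m : nat, exists D : nat,
  forall (r : nat) (j : int), (r < m)%N -> A r%:Z j != 0%N -> (`|j - r%:Z| <= D)%N.
Proof.
move=> [_ Hf]; elim=> [|m [D HD]]; first by exists 0%N.
have [X HX] := finite_fsetP.1 (Hf m%:Z).
exists (maxn D (m + \max_(j <- finmap.enum_fset X) `|j|%N))%N => r j.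
rewrite ltnS leq_eqVlt => /orP [/eqP -> | rm] Arj; last first.
  by apply: leq_trans (HD r j rm Arj) (leq_maxl _ _).
have jX : j \in finmap.enum_fset X.
  have : [set j | A m%:Z j != 0%N] j by [].
  by rewrite HX.
have := @leq_bigmax_seq _ (finmap.enum_fset X) xpredT (fun j : int => `|j|%N) j jX isT.
move: (\max_(j <- finmap.enum_fset X) `|j|%N) => M HM.
apply: leq_trans (leq_maxr _ _); lia.
Qed.

Lemma bound {n A} : (0 < n)%N -> Theta n A -> exists D : nat,
  forall s t, A s t != 0%N -> (`|t - s| <= D)%N.
Proof.
move=> n0 HA; have [D HD] := row_bound HA n; exists D => s t Ast.
have nz : n%:Z != 0 by rewrite eqz_nat -lt0n.
set q := (s %/ n%:Z)%Z; set r := (s %% n%:Z)%Z.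
have r0 : 0 <= r by apply: modz_ge0.
have rn : r < n%:Z by apply: ltz_pmod; rewrite ltz_nat.
have Es : s = r + q * n%:Z by rewrite addrC [LHS](divz_eq s n%:Z).
have Et : t = (t - q * n%:Z) + q * n%:Z by rewrite subrK.
move: Ast; rewrite Es [in A _ _]Et per_int // => Ar.
have Er : r = (`|r|%N)%:Z by rewrite gez0_abs.
move: Ar; rewrite Er => Ar.
have rn' : (`|r|%N < n)%N by lia.
have := HD `|r|%N _ rn' Ar.
rewrite -Er.
have Es' : s = r + q * n%:Z by [].
move: Es'; clear; lia.
Qed.
Definition T (e : nat) : nat := ((e * e.+1) %/ 2)%N.

Lemma cnt_inner (d e D : nat) :
  \sum_(0 <= u < D) ((d + u <= e)%N : nat) = minn D (e.+1 - d).
Proof.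
elim: D => [|D IH]; first by rewrite big_geq // min0n.
rewrite big_nat_recr //= IH.
case: leqP => H /=; lia.
Qed.

Lemma h_closed (e : nat) : \sum_(0 <= d < e) (e - d)%N = T e.
Proof.
elim: e => [|e IH]; first by rewrite big_geq.
rewrite big_nat_recr //=.
have -> : \sum_(0 <= d < e) (e.+1 - d)%N = \sum_(0 <= d < e) ((e - d) + 1)%N.
  by apply: eq_big_nat => d /andP [_ de]; lia.
rewrite big_split /= IH big_const_nat.
rewrite subn0.
have -> : iter e (+%R 1%N) 0%N = e by elim: e {IH} => //= e ->.
rewrite /T.
have -> : (e.+1 * e.+2 = e.+1 * 2 + e * e.+1)%N by lia.
rewrite divnMDl //. lia.
Qed.

Lemma cnt (e D : nat) : (e <= D)%N ->
  \sum_(0 <= d < D.+1) \sum_(0 <= u < D) ((0 < d)%N * (d + u <= e)%N : nat) = T e.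
Proof.
move=> eD; rewrite big_nat_recl // big1 ?add0r; last by move=> u _.
have -> : \sum_(0 <= d < D) \sum_(0 <= u < D) ((0 < d.+1)%N * (d.+1 + u <= e)%N : nat)
   = \sum_(0 <= d < D) (e - d)%N.
  apply: eq_bigr => d _.
  under eq_bigr do rewrite mul1n.
  rewrite cnt_inner; lia.
rewrite (big_cat_nat _ (n := e)) //= [X in _ + X]big_nat_cond [X in _ + X]big1 ?addr0.
  exact: h_closed.
by move=> d /andP [/andP [ed _] _]; lia.
Qed.

Lemma shift1 n (G : int -> nat) : (0 < n)%N -> (forall x, G (x + n%:Z) = G x) ->
  \sum_(1 <= k < n.+1) G (k%:Z + 1) = \sum_(1 <= k < n.+1) G k%:Z.
Proof.
move=> n0 HG; rewrite big_nat_recr // big_nat_recl //.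
have -> : G (n%:Z + 1) = G 1 by rewrite -[G 1]HG; congr G; lia.
rewrite addrC; congr (_ + _); apply: eq_bigr => k _; congr G; lia.
Qed.

Lemma shift_sum n (G : int -> nat) : (0 < n)%N -> (forall x, G (x + n%:Z) = G x) ->
  forall z : int, \sum_(1 <= k < n.+1) G (k%:Z + z) = \sum_(1 <= k < n.+1) G k%:Z.
Proof.
move=> n0 HG.
have S1 : forall z, \sum_(1 <= k < n.+1) G (k%:Z + (z + 1)) = \sum_(1 <= k < n.+1) G (k%:Z + z).
  move=> z; rewrite -(@shift1 n (fun x => G (x + z))) //; last by move=> x; rewrite -[G (x + z)]HG; congr G; lia.
  by apply: eq_bigr => k _; congr G; lia.
have Sm : forall (m : nat) z, \sum_(1 <= k < n.+1) G (k%:Z + (z + m%:Z)) = \sum_(1 <= k < n.+1) G (k%:Z + z).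
  elim=> [|m IH] z; first by apply: eq_bigr => k _; rewrite addr0.
  rewrite -(IH z) -(S1 (z + m%:Z)); apply: eq_bigr => k _; congr G; lia.
have S0 : \sum_(1 <= k < n.+1) G k%:Z = \sum_(1 <= k < n.+1) G (k%:Z + 0).
  by apply: eq_bigr => k _; rewrite addr0.
case=> m.
  by rewrite S0 -(Sm m 0) add0r.
by rewrite S0 -(Sm m.+1 (Negz m)); apply: eq_bigr => k _; congr G; rewrite NegzE; lia.
Qed.

Lemma core n D (G : int -> nat -> nat) (z : nat -> int) : (0 < n)%N ->
  (forall x e, G (x + n%:Z) e = G x e) ->
  \sum_(1 <= k < n.+1) \sum_(0 <= d < D.+1) \sum_(0 <= u < D) \sum_(0 <= e < D.+1)
      (((0 < d)%N * (d + u <= e)%N)%N * G (k%:Z + z u) e)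
  = \sum_(1 <= k < n.+1) \sum_(0 <= e < D.+1) (T e * G k%:Z e).
Proof.
move=> n0 HG.
rewrite exchange_big /=.
under eq_bigr => d _.
  rewrite exchange_big /=.
  under eq_bigr => u _.
    rewrite exchange_big /=.
    under eq_bigr => e _.
      rewrite -mulr_sumr (@shift_sum n (fun x => G x e)) //.
    over.
  over.
over.
simpl.
rewrite [RHS]exchange_big /=.
under [RHS]eq_bigr => e _ do rewrite -mulr_sumr.
under eq_bigr => d _ do rewrite exchange_big /=.
rewrite exchange_big /=.
apply: eq_big_nat => e /andP [_ eD].
rewrite -(@cnt e D); last by lia.
by rewrite mulr_suml; apply: eq_bigr => d _; rewrite mulr_suml.
Qed.

Lemma norm_up n A (D : nat) : (forall s t, A s t != 0%N -> (`|t - s| <= D)%N) ->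
  \sum_(p \in [set p : int * int | (1 <= p.1 <= n%:Z) && (p.1 < p.2)])
      (tri p.1 p.2 * A p.1 p.2)%N
  = \sum_(1 <= k < n.+1) \sum_(0 <= e < D.+1) (T e * A k%:Z (k%:Z + e%:Z)).
Proof.
move=> HD.
rewrite (@fs_conv _ _ (index_iota 1 n.+1) (index_iota 0 D.+1) (fun k e => (k%:Z, k%:Z + e%:Z))).
- apply: eq_big_nat => k /andP [k1 kn]; apply: eq_big_nat => e _ /=.
  case: ifP => H.
    rewrite /tri; have -> : absz (k%:Z + e%:Z - k%:Z)%R = e by lia.
    by [].
  have -> : e = 0%N by lia.
  by [].
- exact: iota_uniq.
- exact: iota_uniq.
- move=> x y x' y' [] H1 H2; lia.
- move=> [i j] /= /andP [/andP [i1 iN] ij] H.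
  have Aij : A i j != 0%N by apply: contraNneq H => ->; rewrite muln0.
  have := HD _ _ Aij => jiD.
  exists `|i|%N; first by rewrite mem_index_iota; lia.
  exists `|j - i|%N; first by rewrite mem_index_iota; lia.
  congr pair; lia.
Qed.

Lemma norm_lo n A (D : nat) : (forall s t, A s t != 0%N -> (`|t - s| <= D)%N) ->
  \sum_(p \in [set p : int * int | (1 <= p.1 <= n%:Z) && (p.2 < p.1)])
      (tri p.1 p.2 * A p.1 p.2)%N
  = \sum_(1 <= k < n.+1) \sum_(0 <= e < D.+1) (T e * A k%:Z (k%:Z - e%:Z)).
Proof.
move=> HD.
rewrite (@fs_conv _ _ (index_iota 1 n.+1) (index_iota 0 D.+1) (fun k e => (k%:Z, k%:Z - e%:Z))).
- apply: eq_big_nat => k /andP [k1 kn]; apply: eq_big_nat => e _ /=.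
  case: ifP => H.
    rewrite /tri; have -> : absz (k%:Z - e%:Z - k%:Z)%R = e by lia.
    by [].
  have -> : e = 0%N by lia.
  by [].
- exact: iota_uniq.
- exact: iota_uniq.
- move=> x y x' y' [] H1 H2; lia.
- move=> [i j] /= /andP [/andP [i1 iN] ij] H.
  have Aij : A i j != 0%N by apply: contraNneq H => ->; rewrite muln0.
  have := HD _ _ Aij => jiD.
  exists `|i|%N; first by rewrite mem_index_iota; lia.
  exists `|j - i|%N; first by rewrite mem_index_iota; lia.
  congr pair; lia.
Qed.

Lemma sigma_up A (D : nat) : (forall s t, A s t != 0%N -> (`|t - s| <= D)%N) ->
  forall (i : int) (d : nat), (0 < d)%N ->
  sigma A i (i + d%:Z) = \sum_(0 <= u < D) \sum_(0 <= e < D.+1)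
     (((0 < d)%N * (d + u <= e)%N)%N * A (i + - u%:Z) (i + - u%:Z + e%:Z)).
Proof.
move=> HD i d d0; rewrite /sigma ifT; last by lia.
rewrite (@fs_conv _ _ (index_iota 0 D) (index_iota 0 D.+1) (fun u e => (i + - u%:Z, i + - u%:Z + e%:Z))).
- apply: eq_big_nat => u _; apply: eq_big_nat => e _ /=.
  rewrite d0 mul1n.
  case: ifP => H; case: leqP => H2 //=; try lia.
- exact: iota_uniq.
- exact: iota_uniq.
- move=> x y x' y' [] H1 H2; lia.
- move=> [s t] /= /andP [si dt] H.
  have := HD _ _ H => tsD.
  exists `|i - s|%N; first by rewrite mem_index_iota; lia.
  exists `|t - s|%N; first by rewrite mem_index_iota; lia.
  congr pair; lia.
Qed.

Lemma sigma_lo A (D : nat) : (forall s t, A s t != 0%N -> (`|t - s| <= D)%N) ->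
  forall (i : int) (d : nat), (0 < d)%N ->
  sigma A i (i - d%:Z) = \sum_(0 <= u < D) \sum_(0 <= e < D.+1)
     (((0 < d)%N * (d + u <= e)%N)%N * A (i + u%:Z) (i + u%:Z - e%:Z)).
Proof.
move=> HD i d d0; rewrite /sigma ifF; last by lia.
rewrite (@fs_conv _ _ (index_iota 0 D) (index_iota 0 D.+1) (fun u e => (i + u%:Z, i + u%:Z - e%:Z))).
- apply: eq_big_nat => u _; apply: eq_big_nat => e _ /=.
  rewrite d0 mul1n.
  case: ifP => H; case: leqP => H2 //=; try lia.
- exact: iota_uniq.
- exact: iota_uniq.
- move=> x y x' y' [] H1 H2; lia.
- move=> [s t] /= /andP [si dt] H.
  have := HD _ _ H => tsD.
  exists `|s - i|%N; first by rewrite mem_index_iota; lia.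
  exists `|t - s|%N; first by rewrite mem_index_iota; lia.
  congr pair; lia.
Qed.

Lemma sigma_bound A (D : nat) : (forall s t, A s t != 0%N -> (`|t - s| <= D)%N) ->
  forall i j, sigma A i j != 0%N -> (`|j - i| <= D)%N.
Proof.
move=> HD i j; rewrite /sigma; case: ifP => ij /fs_nz [[s t] [/= /andP [H1 H2] Ast]];
  have := HD _ _ Ast; lia.
Qed.

Lemma ssum_up n A (D : nat) : (forall s t, A s t != 0%N -> (`|t - s| <= D)%N) ->
  \sum_(p \in [set p : int * int | (1 <= p.1 <= n%:Z) && (p.1 < p.2)]) sigma A p.1 p.2
  = \sum_(1 <= k < n.+1) \sum_(0 <= d < D.+1) (((0 < d)%N : nat) * sigma A k%:Z (k%:Z + d%:Z)).
Proof.
move=> HD.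
rewrite (@fs_conv _ _ (index_iota 1 n.+1) (index_iota 0 D.+1) (fun k e => (k%:Z, k%:Z + e%:Z))).
- apply: eq_big_nat => k /andP [k1 kn]; apply: eq_big_nat => e _ /=.
  case: ifP => H.
    have -> : (0 < e)%N by lia.
    by rewrite mul1r.
  have -> : e = 0%N by lia.
  by rewrite mul0r.
- exact: iota_uniq.
- exact: iota_uniq.
- move=> x y x' y' [] H1 H2; lia.
- move=> [i j] /= /andP [/andP [i1 iN] ij] H.
  have := @sigma_bound A D HD _ _ H => jiD.
  exists `|i|%N; first by rewrite mem_index_iota; lia.
  exists `|j - i|%N; first by rewrite mem_index_iota; lia.
  congr pair; lia.
Qed.

Lemma ssum_lo n A (D : nat) : (forall s t, A s t != 0%N -> (`|t - s| <= D)%N) ->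
  \sum_(p \in [set p : int * int | (1 <= p.1 <= n%:Z) && (p.2 < p.1)]) sigma A p.1 p.2
  = \sum_(1 <= k < n.+1) \sum_(0 <= d < D.+1) (((0 < d)%N : nat) * sigma A k%:Z (k%:Z - d%:Z)).
Proof.
move=> HD.
rewrite (@fs_conv _ _ (index_iota 1 n.+1) (index_iota 0 D.+1) (fun k e => (k%:Z, k%:Z - e%:Z))).
- apply: eq_big_nat => k /andP [k1 kn]; apply: eq_big_nat => e _ /=.
  case: ifP => H.
    have -> : (0 < e)%N by lia.
    by rewrite mul1r.
  have -> : e = 0%N by lia.
  by rewrite mul0r.
- exact: iota_uniq.
- exact: iota_uniq.
- move=> x y x' y' [] H1 H2; lia.
- move=> [i j] /= /andP [/andP [i1 iN] ij] H.
  have := @sigma_bound A D HD _ _ H => jiD.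
  exists `|i|%N; first by rewrite mem_index_iota; lia.
  exists `|i - j|%N; first by rewrite mem_index_iota; lia.
  congr pair; lia.
Qed.

Lemma part_up n A (D : nat) : (0 < n)%N -> Theta n A ->
  (forall s t, A s t != 0%N -> (`|t - s| <= D)%N) ->
  \sum_(1 <= k < n.+1) \sum_(0 <= e < D.+1) (T e * A k%:Z (k%:Z + e%:Z))
  = \sum_(1 <= k < n.+1) \sum_(0 <= d < D.+1) (((0 < d)%N : nat) * sigma A k%:Z (k%:Z + d%:Z)).
Proof.
move=> n0 [Hp _] HD.
have := @core n D (fun x e => A x (x + e%:Z)) (fun u => - u%:Z) n0.
move=> /(_ _) /= <-; last by move=> x e; rewrite -[RHS]Hp; congr A; lia.
apply: eq_bigr => k _; apply: eq_bigr => d _.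
case: (posnP d) => [-> | d0].
  by rewrite mul0r; apply: big1 => u _; apply: big1 => e _.
rewrite (@sigma_up A D HD) // mul1r.
by rewrite d0.
Qed.

Lemma part_lo n A (D : nat) : (0 < n)%N -> Theta n A ->
  (forall s t, A s t != 0%N -> (`|t - s| <= D)%N) ->
  \sum_(1 <= k < n.+1) \sum_(0 <= e < D.+1) (T e * A k%:Z (k%:Z - e%:Z))
  = \sum_(1 <= k < n.+1) \sum_(0 <= d < D.+1) (((0 < d)%N : nat) * sigma A k%:Z (k%:Z - d%:Z)).
Proof.
move=> n0 [Hp _] HD.
have := @core n D (fun x e => A x (x - e%:Z)) (fun u => u%:Z) n0.
move=> /(_ _) /= <-; last by move=> x e; rewrite -[RHS]Hp; congr A; lia.
apply: eq_bigr => k _; apply: eq_bigr => d _.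
case: (posnP d) => [-> | d0].
  by rewrite mul0r; apply: big1 => u _; apply: big1 => e _.
by rewrite (@sigma_lo A D HD) // mul1r d0.
Qed.

Lemma sum_le (s : seq nat) (f g : nat -> nat) :
  (forall x, x \in s -> (f x <= g x)%N) ->
  (\sum_(x <- s) f x <= \sum_(x <- s) g x)%N.
Proof.
elim: s => [|a s IH] H; first by rewrite !big_nil.
rewrite !big_cons.
have := H a (mem_head _ _); have := IH (fun x xs => H x (@mem_behead _ (a :: s) x xs)).
rewrite /GRing.add /=; lia.
Qed.

Lemma sum_lt (s : seq nat) (f g : nat -> nat) :
  (forall x, x \in s -> (f x <= g x)%N) ->
  (exists2 x, x \in s & (f x < g x)%N) ->
  (\sum_(x <- s) f x < \sum_(x <- s) g x)%N.
Proof.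
elim: s => [|a s IH] H [x]; first by [].
rewrite !big_cons inE => /orP [/eqP -> | xs] fg.
  have := @sum_le s f g (fun x xs => H x (@mem_behead _ (a :: s) x xs)).
  rewrite /GRing.add /=; lia.
have := IH (fun x xs => H x (@mem_behead _ (a :: s) x xs)) (ex_intro2 _ _ x xs fg).
have := H a (mem_head _ _).
rewrite /GRing.add /=; lia.
Qed.

Lemma sigma_per n A (D : nat) : Theta n A ->
  (forall s t, A s t != 0%N -> (`|t - s| <= D)%N) ->
  forall (q : int) i j, i != j -> sigma A (i + q * n%:Z) (j + q * n%:Z) = sigma A i j.
Proof.
move=> HA HD q i j ij.
case: (ltgtP i j) => [lt|gt|eq]; last by rewrite eq eqxx in ij.
  have Ej : j = i + (`|j - i|%N)%:Z by lia.
  have d0 : (0 < `|j - i|%N)%N by lia.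
  rewrite Ej (_ : i + (`|j - i|%N)%:Z + q * n = (i + q * n) + (`|j - i|%N)%:Z); last by lia.
  rewrite !(@sigma_up A D HD) //; apply: eq_bigr => u _; apply: eq_bigr => e _.
  rewrite -(per_int HA q (i + - u%:Z) (i + - u%:Z + e%:Z)); congr (_ * A _ _); lia.
have Ej : j = i - (`|i - j|%N)%:Z by lia.
have d0 : (0 < `|i - j|%N)%N by lia.
rewrite Ej (_ : i - (`|i - j|%N)%:Z + q * n = (i + q * n) - (`|i - j|%N)%:Z); last by lia.
rewrite !(@sigma_lo A D HD) //; apply: eq_bigr => u _; apply: eq_bigr => e _.
rewrite -(per_int HA q (i + u%:Z) (i + u%:Z - e%:Z)); congr (_ * A _ _); lia.
Qed.

Lemma decomp n (i : int) : (0 < n)%N -> exists (k : nat) (q : int),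
  [/\ (1 <= k)%N, (k <= n)%N & i = k%:Z + q * n%:Z].
Proof.
move=> n0.
have nz : n%:Z != 0 by rewrite eqz_nat -lt0n.
set q := ((i - 1) %/ n%:Z)%Z; set r := ((i - 1) %% n%:Z)%Z.
have r0 : 0 <= r by apply: modz_ge0.
have rn : r < n%:Z by apply: ltz_pmod; rewrite ltz_nat.
have Es : i - 1 = q * n%:Z + r by rewrite [LHS](divz_eq (i - 1) n%:Z).
exists (absz (r + 1)%R), q; split; lia.
Qed.

Definition SU n (D : nat) (X : zmat) :=
  \sum_(1 <= k < n.+1) \sum_(0 <= d < D.+1) (((0 < d)%N : nat) * sigma X k%:Z (k%:Z + d%:Z)).
Definition SL n (D : nat) (X : zmat) :=
  \sum_(1 <= k < n.+1) \sum_(0 <= d < D.+1) (((0 < d)%N : nat) * sigma X k%:Z (k%:Z - d%:Z)).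

Theorem lemma3p7p6 (n : nat) : (1 <= n)%N ->
  (forall A : zmat, Theta n A ->
     mnorm n A =
       (\sum_(p \in [set p : int * int | (1 <= p.1 <= n%:Z) && (p.1 < p.2)])
           sigma A p.1 p.2)
       + (\sum_(p \in [set p : int * int | (1 <= p.1 <= n%:Z) && (p.2 < p.1)])
           sigma A p.1 p.2)) /\
  (forall A B : zmat, Theta n A -> Theta n B -> mprec A B ->
     (mnorm n A < mnorm n B)%N).
Proof.
move=> n1.
have main_eq : forall A (D : nat), Theta n A ->
    (forall s t, A s t != 0%N -> (`|t - s| <= D)%N) ->
    mnorm n A = (SU n D A + SL n D A)%N.
  move=> A D HA HD.
  by rewrite /mnorm (norm_up n A D HD) (norm_lo n A D HD) (part_up n A D n1 HA HD) (part_lo n A D n1 HA HD).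
split.
  move=> A HA; have [D HD] := bound n1 HA.
  by rewrite (main_eq A D HA HD) (ssum_up n A D HD) (ssum_lo n A D HD).
move=> A B HA HB [Hle [i [j [ij Hlt]]]].
have [DA HDA] := bound n1 HA; have [DB HDB] := bound n1 HB.
pose D := maxn DA DB.
have HA' : forall s t, A s t != 0%N -> (`|t - s| <= D)%N.
  by move=> s t /HDA H; apply: leq_trans H (leq_maxl _ _).
have HB' : forall s t, B s t != 0%N -> (`|t - s| <= D)%N.
  by move=> s t /HDB H; apply: leq_trans H (leq_maxr _ _).
rewrite (main_eq A D HA HA') (main_eq B D HB HB').
have ptw : forall (k d : nat) (sg : bool),
   (((0 < d)%N : nat) * sigma A k%:Z (if sg then k%:Z + d%:Z else k%:Z - d%:Z)%R
    <= ((0 < d)%N : nat) * sigma B k%:Z (if sg then k%:Z + d%:Z else k%:Z - d%:Z)%R)%N.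
  move=> k d sg; case: (posnP d) => [-> // | d0].
  rewrite !mul1n; apply: Hle; case: sg; lia.
have le_up : (SU n D A <= SU n D B)%N.
  apply: sum_le => k _; apply: sum_le => d _; exact: (ptw k d true).
have le_lo : (SL n D A <= SL n D B)%N.
  apply: sum_le => k _; apply: sum_le => d _; exact: (ptw k d false).
have jiD : (`|j - i| <= D)%N.
  apply: (@sigma_bound B D HB'); lia.
have [k [q [k1 kn Ei]]] := decomp n i n1.
subst i.
case: (ltgtP (k%:Z + q * n%:Z) j) => [lt|gt|eq]; last by rewrite eq eqxx in ij.
  pose d := absz (j - (k%:Z + q * n%:Z))%R.
  have Ej : j = (k%:Z + d%:Z) + q * n%:Z by rewrite /d; lia.
  have d0 : (0 < d)%N by rewrite /d; lia.
  have kd : k%:Z != k%:Z + d%:Z by lia.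
  move: Hlt; rewrite Ej (sigma_per n A D HA HA') // (sigma_per n B D HB HB') // => Hlt.
  suff : (SU n D A < SU n D B)%N by move: le_lo; rewrite /GRing.add /=; lia.
  apply: sum_lt => [k' _|]; first by apply: sum_le => d' _; exact: (ptw k' d' true).
  exists k; first by rewrite mem_index_iota; lia.
  apply: sum_lt => [d' _|]; first exact: (ptw k d' true).
  exists d; first by rewrite mem_index_iota; rewrite /d; lia.
  by rewrite d0 !mul1r.
pose d := absz ((k%:Z + q * n%:Z) - j)%R.
have Ej : j = (k%:Z - d%:Z) + q * n%:Z by rewrite /d; lia.
have d0 : (0 < d)%N by rewrite /d; lia.
have kd : k%:Z != k%:Z - d%:Z by lia.
move: Hlt; rewrite Ej (sigma_per n A D HA HA') // (sigma_per n B D HB HB') // => Hlt.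
suff : (SL n D A < SL n D B)%N by move: le_up; rewrite /GRing.add /=; lia.
apply: sum_lt => [k' _|]; first by apply: sum_le => d' _; exact: (ptw k' d' false).
exists k; first by rewrite mem_index_iota; lia.
apply: sum_lt => [d' _|]; first exact: (ptw k d' false).
exists d; first by rewrite mem_index_iota; rewrite /d; lia.
by rewrite d0 !mul1r.
Qed.
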